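(* Let $D=(Q,\Sigma,\delta,q_0,A)$ be an f-minimal DFA, and let $p\in F(D)$ and $q\in Q$ with $L(p)\sim L(q)$. Then $p=q$.
   Context: All DFAs are complete and all states are reachable from the start state. $L\sim L'$ means $L\triangle L'$ is finite; for DFAs, $D\sim D'$ means $L(D)\sim L(D')$. For a state $r$, $L(r)$ is the language recognized by $(Q,\Sigma,\delta,r,A)$. The finite part $F(D)$ is the set of states $r$ such that $\{w\in\Sigma^*:\delta(q_0,w)=r\}$ is finite. A DFA $D$ with state set $Q$ is \emph{f-minimal} if every DFA $D'$ (with state set $Q'$) satisfying $D\sim D'$ has $|Q|\le|Q'|$. *)

(* Defs.v *)
From mathcomp Require Import all_boot.
Set Implicit Arguments. Unset Strict Implicit. Unset Printing Implicit Defensive.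

Record dfa (Sigma : finType) := DFA {
  state : finType;
  delta : state -> Sigma -> state;
  start : state;
  accept : {set state}
}.

Section DFA.
Variable Sigma : finType.
Implicit Types (D : dfa Sigma).

Definition delta_star D (r : state D) (w : seq Sigma) : state D :=
  foldl (@delta _ D) r w.

Definition lang := seq Sigma -> Prop.

Definition finite_lang (L : lang) : Prop :=
  exists s : seq (seq Sigma), forall w, L w -> w \in s.

Definition lang_sim (L L' : lang) : Prop :=
  finite_lang (fun w => (L w /\ ~ L' w) \/ (L' w /\ ~ L w)).

Definition lang_of D (r : state D) : lang := fun w => delta_star r w \in accept D.

Definition lang_dfa D : lang := lang_of (start D).

Definition reachable D : Prop := forall r : state D, exists w, delta_star (start D) w = r.

Definition dfa_sim D D' : Prop := lang_sim (lang_dfa D) (lang_dfa D').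

Definition in_finite_part D (r : state D) : Prop :=
  finite_lang (fun w => delta_star (start D) w = r).

Definition f_minimal D : Prop :=
  forall D' : dfa Sigma, reachable D' -> dfa_sim D D' -> #|state D| <= #|state D'|.

End DFA.

(* Main.v *)
Require Import Defs.
From mathcomp Require Import all_boot.
From Stdlib Require Import ClassicalEpsilon.
Set Implicit Arguments. Unset Strict Implicit. Unset Printing Implicit Defensive.

Section Gen.
Variable Sigma : finType.

Lemma ds_cons (E : dfa Sigma) (r : state E) a w :
  delta_star r (a :: w) = delta_star (delta r a) w.
Proof. by []. Qed.

Lemma ds_cat (E : dfa Sigma) (r : state E) u v :
  delta_star r (u ++ v) = delta_star (delta_star r u) v.
Proof. by rewrite /delta_star foldl_cat. Qed.

Lemma lang_sim_sym (L L' : lang Sigma) : lang_sim L L' -> lang_sim L' L.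
Proof. move=> [s Hs]; exists s => w Hw; apply: Hs; tauto. Qed.

Lemma lang_sim_ext (L L2 L2' : lang Sigma) :
  (forall w, L2 w <-> L2' w) -> lang_sim L L2 -> lang_sim L L2'.
Proof.
move=> Heq [s Hs]; exists s => w Hw; apply: Hs; have := Heq w; tauto.
Qed.

Definition reachP (E : dfa Sigma) (r : state E) : bool :=
  if excluded_middle_informative (exists w, delta_star (start E) w = r)
  then true else false.

Lemma reachPP (E : dfa Sigma) (r : state E) :
  reachP r <-> exists w, delta_star (start E) w = r.
Proof.
rewrite /reachP; case: excluded_middle_informative => H; split => //.
Qed.

Lemma reach_start (E : dfa Sigma) : reachP (start E).
Proof. by apply/reachPP; exists [::]. Qed.

Lemma reach_delta (E : dfa Sigma) (r : state E) a : reachP r -> reachP (delta r a).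
Proof.
move/reachPP=> [w Hw]; apply/reachPP; exists (w ++ [:: a]).
by rewrite ds_cat Hw.
Qed.

Definition RS (E : dfa Sigma) : finType := {r : state E | reachP r}.

Definition RE (E : dfa Sigma) : dfa Sigma :=
  @DFA Sigma (RS E)
    (fun r a => exist _ (delta (val r) a) (reach_delta a (valP r)))
    (exist _ (start E) (reach_start E))
    [set r : RS E | val r \in accept E].

Lemma RE_run (E : dfa Sigma) (r : state (RE E)) w :
  val (delta_star r w) = delta_star (val r) w.
Proof. by elim: w r => [|a w IH] r //; exact: IH. Qed.

Lemma RE_reach (E : dfa Sigma) : reachable (RE E).
Proof.
move=> r; have := valP r; move/reachPP=> [w Hw]; exists w.
by apply: val_inj; rewrite RE_run.
Qed.

Lemma RE_lang (E : dfa Sigma) w : lang_dfa (RE E) w <-> lang_dfa E w.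
Proof.
rewrite /lang_dfa /lang_of /= inE RE_run //.
Qed.

Lemma RE_card (E : dfa Sigma) (x : state E) : ~~ reachP x -> #|RS E| < #|state E|.
Proof.
move=> Hx; rewrite /RS card_sig -(cardC [pred r | reachP r]).
rewrite -[X in X < _]addn0 ltn_add2l; apply/card_gt0P; exists x.
by rewrite !inE.
Qed.

Lemma size_le_sum (W : seq (seq Sigma)) t : t \in W -> size t <= sumn (map size W).
Proof.
elim: W => [|x W IH] //=; rewrite inE => /orP [/eqP ->|H]; first exact: leq_addr.
by apply: leq_trans (IH H) _; apply: leq_addl.
Qed.

End Gen.

Section Main.
Variable Sigma : finType.
Variable D : dfa Sigma.
Notation Q := (state D).

Section Core.
Variables p q : Q.
Hypothesis Hne : p != q.
Hypothesis Hnr : forall y, delta_star q y != p.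

Definition fmap (r : Q) : Q := if r == p then q else r.

Definition D1 : dfa Sigma :=
  @DFA Sigma Q (fun r a => fmap (delta r a)) (fmap (start D)) (accept D).

Definition run1 (r : Q) w : Q := @delta_star _ D1 r w.

Lemma run1_cons r a w : run1 r (a :: w) = run1 (fmap (delta r a)) w.
Proof. by []. Qed.

Lemma fmap_ne r : fmap r != p.
Proof. by rewrite /fmap; case: ifP => [_|/negbT //]; rewrite eq_sym. Qed.

Lemma run1_ne r w : r != p -> run1 r w != p.
Proof. elim: w r => [|a w IH] r H //; rewrite run1_cons; apply: IH; exact: fmap_ne. Qed.

Lemma L1 r w : (forall y, delta_star r y != p) -> run1 r w = delta_star r w.
Proof.
elim: w r => [|a w IH] r H //; rewrite run1_cons ds_cons.
have Ha : delta r a != p := H [:: a].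
rewrite /fmap (negbTE Ha); apply: IH => y; exact: (H (a :: y)).
Qed.

Lemma L2 w r : r != p ->
  run1 r w = delta_star r w \/
  exists u v, w = u ++ v /\ delta_star r u = p /\ run1 r w = delta_star q v.
Proof.
elim: w r => [|a w IH] r Hr; first by left.
rewrite run1_cons ds_cons /fmap.
case: eqP => Hs.
- right; exists [:: a], w; split => //; split => //; exact: L1.
- have := IH (delta r a) (introN eqP Hs); case=> [->|[u [v [Hw [Hu Hrun]]]]]; first by left.
  right; exists (a :: u), v; split; first by rewrite Hw.
  by split.
Qed.

Lemma Lstart w :
  run1 (start D1) w = delta_star (start D) w \/
  exists u v, w = u ++ v /\ delta_star (start D) u = p /\ run1 (start D1) w = delta_star q v.
Proof.
rewrite /= /fmap; case: eqP => Hs.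
- right; exists [::], w; split => //; split => //; exact: L1.
- exact: L2 (introN eqP Hs).
Qed.

Hypothesis Hp : in_finite_part p.
Hypothesis Hpq : lang_sim (lang_of p) (lang_of q).

Lemma sim1 : lang_sim (lang_dfa D) (lang_dfa D1).
Proof.
case: Hp => W HW; case: Hpq => E HE.
exists [seq u ++ v | u <- W, v <- E] => w Hw.
have Hw' : (delta_star (start D) w \in accept D /\ ~ run1 (start D1) w \in accept D)
   \/ (run1 (start D1) w \in accept D /\ ~ delta_star (start D) w \in accept D) by exact: Hw.
case: (Lstart w) => [Heq | [u [v [Hwe [Hu Hrun]]]]].
- rewrite Heq in Hw'; exfalso; tauto.
- rewrite Hwe; apply: allpairs_f; first exact: HW.
  apply: HE; rewrite Hrun Hwe ds_cat Hu in Hw'; exact: Hw'.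
Qed.

Lemma core : f_minimal D -> False.
Proof.
move=> Hmin.
have Hc : #|RS D1| < #|Q|.
  apply: (@RE_card _ D1 p); apply/negP => /reachPP [w Hw].
  have := run1_ne w (fmap_ne (start D)); rewrite /run1 Hw eqxx //.
have := Hmin (RE D1) (@RE_reach _ D1) (lang_sim_ext (fun w => iff_sym (@RE_lang _ D1 w)) sim1).
by rewrite leqNgt Hc.
Qed.

End Core.

Fixpoint cpow (c : seq Sigma) n : seq Sigma :=
  if n is n'.+1 then c ++ cpow c n' else [::].

Lemma cpow_run (p : Q) c n : delta_star p c = p -> delta_star p (cpow c n) = p.
Proof. move=> H; elim: n => [|n IH] //=; by rewrite ds_cat H IH. Qed.

Lemma cpow_size c n : size (cpow c n) = n * size c.
Proof. elim: n => [|n IH] //=; by rewrite size_cat IH mulSn. Qed.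

Theorem mainTheorem9_aux :
  reachable D -> f_minimal D ->
  forall p q : state D,
    in_finite_part p -> lang_sim (lang_of p) (lang_of q) -> p = q.
Proof.
move=> Hreach Hmin p q Hp Hpq.
case: (eqVneq p q) => // Hne; exfalso.
case: (classic (exists y, delta_star q y = p)) => [[y Hy]|Hn]; last first.
  apply: (core Hne _ Hp Hpq Hmin) => y; apply/eqP => H; apply: Hn; by exists y.
case: (Hp) => W HW.
have Hq : in_finite_part q.
  exists [seq take (size t - size y) t | t <- W] => x Hx.
  have Ht : x ++ y \in W by apply: HW; rewrite ds_cat Hx Hy.
  have -> : x = take (size (x ++ y) - size y) (x ++ y).
    by rewrite size_cat addnK take_size_cat.
  exact: map_f.
have Hnr : forall z, delta_star p z != q.
  move=> z; apply/eqP => Hz.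
  have Hc : delta_star p (z ++ y) = p by rewrite ds_cat Hz Hy.
  have Hsz : 0 < size (z ++ y).
    rewrite lt0n size_eq0; apply/negP => /eqP Hzy.
    move: Hzy Hz; clear Hc; case: z => // _ Hz.
    have Hz' : p = q := Hz.
    by move: Hne; rewrite Hz' eqxx.
  case: (Hreach p) => x0 Hx0.
  set m := sumn (map size W).
  have Hin : x0 ++ cpow (z ++ y) m.+1 \in W.
    by apply: HW; rewrite ds_cat Hx0 cpow_run.
  have := size_le_sum Hin; rewrite size_cat cpow_size -/m.
  have Hm : m.+1 <= m.+1 * size (z ++ y) by rewrite leq_pmulr.
  move=> Hle; have := leq_trans Hm (leq_trans (leq_addl (size x0) _) Hle).
  by rewrite ltnn.
apply: (core (p:=q) (q:=p) _ Hnr Hq (lang_sim_sym Hpq) Hmin).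
by rewrite eq_sym.
Qed.

End Main.

Theorem mainTheorem9 (Sigma : finType) (D : dfa Sigma) :
  reachable D -> f_minimal D ->
  forall p q : state D,
    in_finite_part p -> lang_sim (lang_of p) (lang_of q) -> p = q.
Proof. exact: (@mainTheorem9_aux Sigma D). Qed.
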